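(* Consider a generalized discrete preference game on a tree metric: a finite set $V$ of players, a directed graph on $V$ with nonnegative weights $w_{ij}$ on arcs $(i,j)$ (with $N_i$ the set of out-neighbours of $i$), a finite tree $\mathcal{T}$ with positive edge lengths whose node set $L$ is the strategy set and whose shortest-path metric is $d$, and for each player $i$ and node $v\in L$ a nonnegative penalty $p_i(v)$. The cost of player $i$ in profile $z=(z_i)_{i\in V}\in L^V$ is $c_i(z)=\sum_{v\in L} p_i(v)\, d(v,z_i)+\sum_{j\in N_i} w_{ij}\, d(z_i,z_j)$. Fix a root $r$ of $\mathcal{T}$ and run the following procedure (Tree Metric Algo): initially set $z_i\leftarrow r$ for every player $i$; while there exists a player $i$ and a child $v$ of $z_i$ (in $\mathcal{T}$ rooted at $r$) such that changing $z_i$ to $v$ (keeping all other strategies fixed) strictly decreases $c_i$, set $z_i\leftarrow v$ for some such pair. Then this procedure terminates (after at most $|V|\cdot|L|$ moves), and the final profile $z$ is a pure Nash equilibrium, i.e. no player can strictly decrease her cost by changing only her own strategy. In particular such a game always has a pure Nash equilibrium. *)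

(* Defs.v *)
From mathcomp Require Import all_boot all_order all_algebra.
Set Implicit Arguments. Unset Strict Implicit. Unset Printing Implicit Defensive.
Import Order.TTheory GRing.Theory Num.Theory.
Local Open Scope ring_scope.

Section TreeGame.
Variables (R : realFieldType) (V L : finType).

(* A finite tree on node set L, rooted at r, given by a parent map [par]
   (par r = r, every node reaches r by iterating par) and, for each
   non-root node v, the (positive) length [len v] of the edge {v, par v}. *)
Definition rooted_tree (r : L) (par : L -> L) : Prop :=
  par r = r /\ forall v : L, exists k : nat, iter k par v = r.

Definition is_child (r : L) (par : L -> L) (u v : L) : bool :=
  (v != r) && (par v == u).

Definition tedge (r : L) (par : L -> L) : rel L :=
  fun u v => is_child r par u v || is_child r par v u.

(* length of the edge {u, v} (meaningful when tedge r par u v) *)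
Definition elen (r : L) (par : L -> L) (len : L -> R) (u v : L) : R :=
  if is_child r par u v then len v else len u.

Definition walk_len (r : L) (par : L -> L) (len : L -> R) (u : L) (s : seq L) : R :=
  \sum_(e <- zip (u :: s) s) elen r par len e.1 e.2.

Definition shortest_path_metric (r : L) (par : L -> L) (len : L -> R)
  (d : L -> L -> R) : Prop :=
  forall u v : L,
    (exists s : seq L, [/\ path (tedge r par) u s, last u s = v
                         & walk_len r par len u s = d u v]) /\
    (forall s : seq L, path (tedge r par) u s -> last u s = v ->
                       d u v <= walk_len r par len u s).

Definition upd (z : V -> L) (i : V) (x : L) : V -> L :=
  fun k => if k == i then x else z k.

Definition cost (d : L -> L -> R) (p : V -> L -> R) (arc : rel V)
  (w : V -> V -> R) (z : V -> L) (i : V) : R :=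
  \sum_(v : L) p i v * d v (z i) + \sum_(j | arc i j) w i j * d (z i) (z j).

Definition tm_step (r : L) (par : L -> L) (d : L -> L -> R) (p : V -> L -> R)
  (arc : rel V) (w : V -> V -> R) (z z' : V -> L) : Prop :=
  exists (i : V) (v : L), [/\ is_child r par (z i) v,
     cost d p arc w (upd z i v) i < cost d p arc w z i & z' = upd z i v].

Definition tm_run (r : L) (par : L -> L) (d : L -> L -> R) (p : V -> L -> R)
  (arc : rel V) (w : V -> V -> R) (zs : nat -> V -> L) (n : nat) : Prop :=
  (forall i, zs 0%N i = r) /\
  (forall k, (k < n)%N -> tm_step r par d p arc w (zs k) (zs k.+1)).

Definition pure_nash (d : L -> L -> R) (p : V -> L -> R) (arc : rel V)
  (w : V -> V -> R) (z : V -> L) : Prop :=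
  forall (i : V) (x : L), cost d p arc w z i <= cost d p arc w (upd z i x) i.

End TreeGame.

(* Main.v *)
Require Import Defs.
From mathcomp Require Import all_boot all_order all_algebra.
From mathcomp Require Import lra.
From Stdlib Require Import ClassicalEpsilon FunctionalExtensionality Classical_Prop.
Set Implicit Arguments. Unset Strict Implicit. Unset Printing Implicit Defensive.
Import Order.TTheory GRing.Theory Num.Theory.
Local Open Scope ring_scope.

Section Tree.
Variables (R : realFieldType) (L : finType).
Variables (r : L) (par : L -> L) (len : L -> R) (d : L -> L -> R).
Hypothesis Htree : rooted_tree r par.
Hypothesis Hlen : forall v : L, v != r -> 0 < len v.
Hypothesis Hd : shortest_path_metric r par len d.

Definition anc (c u : L) : Prop := exists m, iter m par u = c.
Definition subb (c u : L) : bool :=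
  if excluded_middle_informative (anc c u) then true else false.

Lemma subbP c u : reflect (anc c u) (subb c u).
Proof. rewrite /subb; case: excluded_middle_informative => H; by constructor. Qed.

Lemma iter_r m : iter m par r = r.
Proof. elim: m => // m IH; by rewrite iterS IH Htree.1. Qed.

Lemma no_cycle v m : v != r -> iter m.+1 par v != v.
Proof.
move=> vr; apply/eqP => E.
have Et : forall t, iter (t * m.+1) par v = v.
  elim=> // t IH; by rewrite mulSn iterD IH E.
have [k Hk] := Htree.2 v.
have : iter (k * m.+1) par v = r.
  have -> : (k * m.+1 = (k * m.+1 - k) + k)%N.
    by rewrite subnK // leq_pmulr.
  by rewrite iterD Hk iter_r.
by rewrite Et => Ev; rewrite Ev eqxx in vr.
Qed.

Lemma anc_refl c : anc c c. Proof. by exists 0%N. Qed.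

Lemma anc_r u : anc r u. Proof. exact: Htree.2. Qed.

Lemma anc_par c u : anc c (par u) -> anc c u.
Proof. by case=> m Hm; exists m.+1; rewrite iterSr. Qed.

Lemma not_anc_par e : e != r -> ~ anc e (par e).
Proof. by move=> er [m Hm]; move: (no_cycle m er); rewrite iterSr Hm eqxx. Qed.

Lemma child_anc c u : anc c u -> u != c -> anc c (par u).
Proof.
case=> [[|m] Hm] uc; first by move: uc; rewrite -Hm /= eqxx.
by exists m; rewrite -iterSr.
Qed.

Lemma not_2cycle u x : u != r -> par u = x -> par x = u -> False.
Proof. move=> ur E1 E2; move: (no_cycle 1 ur); by rewrite iterS /= E1 E2 eqxx. Qed.

Lemma elen_sym u x : tedge r par u x -> elen r par len u x = elen r par len x u.
Proof.
rewrite /tedge /elen /is_child.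
case/orP=> /andP[H1 /eqP H2].
- rewrite H1 H2 eqxx /=; case: ifP => // /andP[H3 /eqP H4].
  by exfalso; apply: (not_2cycle H3 H4 H2).
- rewrite H1 H2 eqxx /=; case: ifP => // /andP[H3 /eqP H4].
  by exfalso; apply: (not_2cycle H1 H2 H4).
Qed.

Lemma elen_ge0 u x : tedge r par u x -> 0 <= elen r par len u x.
Proof.
rewrite /tedge /elen; case: ifP => [/andP[H _]|_] /= H'.
  exact: ltW (Hlen H).
by case/andP: H' => H _; exact: ltW (Hlen H).
Qed.

Lemma walk_len_nil u : walk_len r par len u [::] = 0.
Proof. by rewrite /walk_len big_nil. Qed.

Lemma walk_len_cons u x s :
  walk_len r par len u (x :: s) = elen r par len u x + walk_len r par len x s.
Proof. by rewrite /walk_len /= big_cons. Qed.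

Lemma walk_len_cat u s1 s2 :
  walk_len r par len u (s1 ++ s2) =
  walk_len r par len u s1 + walk_len r par len (last u s1) s2.
Proof.
elim: s1 u => [|x s1 IH] u /=; first by rewrite walk_len_nil add0r.
by rewrite !walk_len_cons IH addrA.
Qed.

Lemma walk_len_ge0 u s : path (tedge r par) u s -> 0 <= walk_len r par len u s.
Proof.
elim: s u => [|x s IH] u /=; first by rewrite walk_len_nil.
case/andP=> H1 H2; rewrite walk_len_cons; apply: addr_ge0; [exact: elen_ge0|exact: IH].
Qed.

Lemma walk_rev u s : path (tedge r par) u s ->
  exists t, [/\ path (tedge r par) (last u s) t, last (last u s) t = u
              & walk_len r par len (last u s) t = walk_len r par len u s].
Proof.
elim: s u => [|x s IH] u /=.
  by move=> _; exists [::]; rewrite walk_len_nil.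
case/andP=> H1 H2; have [t [P1 P2 P3]] := IH x H2.
exists (t ++ [:: u]); split.
- rewrite cat_path P1 P2 /= andbT /tedge orbC; exact: H1.
- by rewrite last_cat.
- rewrite walk_len_cat P3 P2 walk_len_cons walk_len_nil addr0 walk_len_cons.
  by rewrite (elen_sym H1) addrC.
Qed.

Lemma d_ge0 u v : 0 <= d u v.
Proof using Htree Hlen Hd. have [[s [P1 _ <-]] _] := Hd u v; exact: walk_len_ge0. Qed.

Lemma d_xx u : d u u = 0.
Proof using Htree Hlen Hd.
apply/eqP; rewrite eq_le d_ge0 andbT.
have [_ H] := Hd u u; by move: (H [::] erefl erefl); rewrite walk_len_nil.
Qed.

Lemma d_tri a b c : d a c <= d a b + d b c.
Proof using Htree Hlen Hd.
have [[s1 [P1 L1 W1]] _] := Hd a b.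
have [[s2 [P2 L2 W2]] _] := Hd b c.
have [_ H] := Hd a c.
have := H (s1 ++ s2); rewrite cat_path P1 L1 P2 last_cat L1 L2 walk_len_cat L1 W1 W2.
move=> H'; exact: H'.
Qed.

Lemma d_sym a b : d a b = d b a.
Proof using Htree Hlen Hd.
suff H : forall a b, d a b <= d b a by apply/eqP; rewrite eq_le !H.
move=> x y; have [[s [P1 L1 W1]] _] := Hd y x.
have [t [Q1 Q2 Q3]] := walk_rev P1.
rewrite L1 in Q1 Q2 Q3.
have [_ H] := Hd x y; rewrite -W1 -Q3; exact: H.
Qed.

Lemma split_walk e a s : e != r -> anc e a -> ~ anc e (last a s) ->
  path (tedge r par) a s ->
  exists s1 s2, [/\ last a s1 = e, path (tedge r par) a s1,
    path (tedge r par) (par e) s2, last (par e) s2 = last a s &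
    walk_len r par len a s =
      walk_len r par len a s1 + len e + walk_len r par len (par e) s2].
Proof.
move=> er; elim: s a => [|x s IH] a Ha /=; first by [].
move=> Hl /andP[Hax Hp].
case: (excluded_middle_informative (anc e x)) => Hx.
  have [s1 [s2 [A1 A2 A3 A4 A5]]] := IH x Hx Hl Hp.
  exists (x :: s1), s2; split => //=; first by rewrite Hax.
  by rewrite !walk_len_cons A5 !addrA.
have Hch : is_child r par x a.
  move: Hax; rewrite /tedge => /orP[]// /andP[_ /eqP Hpx].
  by exfalso; apply: Hx; apply: anc_par; rewrite Hpx; exact: Ha.
move: (Hch) => /andP[ar /eqP Hpa].
have ae : a = e.
  apply/eqP; apply: contraT => ae; exfalso; apply: Hx; rewrite -Hpa; exact: child_anc.
subst a; exists [::], s; split => //=; try by rewrite Hpa.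
rewrite walk_len_nil add0r walk_len_cons Hpa /elen.
case: ifP => // /andP[H1 /eqP H2].
by exfalso; apply: (not_2cycle er Hpa H2).
Qed.

Lemma d_epar e : e != r -> d e (par e) = len e.
Proof using Htree Hlen Hd.
move=> er; apply/eqP; rewrite eq_le; apply/andP; split.
  have [_ H] := Hd e (par e).
  have := H [:: par e]; rewrite walk_len_cons walk_len_nil addr0 /= andbT.
  rewrite /elen /tedge {2 3}/is_child er eqxx orbT /=.
  case: ifP => [/andP[H1 /eqP H2]|_]; last by apply.
  by exfalso; apply: (not_2cycle er erefl H2).
have [[s [P1 L1 W1]] _] := Hd e (par e).
have Hl : ~ anc e (last e s) by rewrite L1; exact: not_anc_par.
have [s1 [s2 [A1 A2 A3 A4 A5]]] := split_walk er (anc_refl e) Hl P1.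
rewrite -W1 A5.
have := walk_len_ge0 A2; have := walk_len_ge0 A3; lra.
Qed.

Lemma d_split e a b : e != r -> anc e a -> ~ anc e b ->
  d a b = d a e + len e + d (par e) b.
Proof.
move=> er Ha Hb; apply/eqP; rewrite eq_le; apply/andP; split.
  have := d_tri a e b; have := d_tri e (par e) b; rewrite d_epar //; lra.
have [[s [P1 L1 W1]] _] := Hd a b.
have Hl : ~ anc e (last a s) by rewrite L1.
have [s1 [s2 [A1 A2 A3 A4 A5]]] := split_walk er Ha Hl P1.
rewrite -W1 A5.
have [_ H1] := Hd a e; have [_ H2] := Hd (par e) b.
have := H1 s1 A2 A1; have := H2 s2 A3 (etrans A4 L1); lra.
Qed.

Lemma d_split1 e a b : e != r -> anc e a -> ~ anc e b -> d a b = d a e + d e b.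
Proof using Htree Hlen Hd.
move=> er Ha Hb; rewrite (d_split er Ha Hb) (d_split er (anc_refl e) Hb) d_xx; lra.
Qed.

Lemma d_split2 e a b : e != r -> anc e a -> ~ anc e b ->
  d a b = d a (par e) + d (par e) b.
Proof using Htree Hlen Hd.
move=> er Ha Hb; rewrite (d_split er Ha Hb) (d_split er Ha (not_anc_par er)) d_xx; lra.
Qed.

End Tree.

Lemma gen_sum (R : realFieldType) (K : finType) (P : pred K) (a D D' : K -> R)
  (s : pred K) (dl : R) :
  (forall k, P k -> 0 <= a k) ->
  (forall k, P k -> s k -> D k + dl <= D' k) ->
  (forall k, P k -> ~~ s k -> D k - dl <= D' k) ->
  \sum_(k | P k) a k * D k +
    dl * (\sum_(k | P k && s k) a k - \sum_(k | P k && ~~ s k) a k)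
  <= \sum_(k | P k) a k * D' k.
Proof.
move=> Ha H1 H2.
rewrite (bigID s P (fun k => a k * D' k)) (bigID s P (fun k => a k * D k)) /=.
have E1 : \sum_(k | P k && s k) (a k * D k + dl * a k)
    <= \sum_(k | P k && s k) a k * D' k.
  apply: ler_sum => k /andP[Pk sk].
  rewrite (mulrC dl) -mulrDr; apply: ler_wpM2l; [exact: Ha|exact: H1].
have E2 : \sum_(k | P k && ~~ s k) (a k * D k - dl * a k)
    <= \sum_(k | P k && ~~ s k) a k * D' k.
  apply: ler_sum => k /andP[Pk sk].
  rewrite (mulrC dl) -mulrBr; apply: ler_wpM2l; [exact: Ha|exact: H2].
rewrite big_split /= -mulr_sumr in E1.
rewrite sumrB -mulr_sumr in E2.
lra.
Qed.

Section Game.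
Variables (R : realFieldType) (V L : finType).
Variables (arc : rel V) (w : V -> V -> R) (p : V -> L -> R).
Variables (r : L) (par : L -> L) (len : L -> R) (d : L -> L -> R).
Hypothesis Htree : rooted_tree r par.
Hypothesis Hlen : forall v : L, v != r -> 0 < len v.
Hypothesis Hd : shortest_path_metric r par len d.
Hypothesis Hw : forall i j : V, 0 <= w i j.
Hypothesis Hp : forall (i : V) (v : L), 0 <= p i v.

Definition F (z : V -> L) (i : V) (x : L) := cost d p arc w (upd z i x) i.

Definition Wt (z : V -> L) (i : V) (s : pred L) :=
  \sum_(v | s v) p i v + \sum_(j | arc i j && (j != i) && s (z j)) w i j.

Lemma F_eq z i x : F z i x =
  \sum_(v : L) p i v * d x v + \sum_(j | arc i j && (j != i)) w i j * d x (z j).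
Proof.
rewrite /F /cost {1}/upd eqxx; congr (_ + _).
  by apply: eq_bigr => v _; rewrite (d_sym Htree Hlen Hd).
rewrite (bigID (fun j => j != i)) /=.
rewrite [X in _ + X]big1 ?addr0.
  by apply: eq_bigr => j /andP[_ ji]; rewrite /upd (negbTE ji) eqxx.
move=> j /andP[_]; rewrite negbK => /eqP ->; by rewrite /upd eqxx (d_xx Htree Hlen Hd) mulr0.
Qed.

Lemma Fgen z i x y (s : pred L) dl :
  (forall q, s q -> d y q + dl <= d x q) ->
  (forall q, ~~ s q -> d y q - dl <= d x q) ->
  F z i y + dl * (Wt z i s - Wt z i (predC s)) <= F z i x.
Proof.
move=> H1 H2; rewrite !F_eq /Wt.
have G1 := @gen_sum R L xpredT (p i) (d y) (d x) s dl (fun k _ => Hp i k)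
   (fun k _ => H1 k) (fun k _ => H2 k).
have G2 := @gen_sum R V (fun j => arc i j && (j != i)) (w i) (fun j => d y (z j))
   (fun j => d x (z j)) (fun j => s (z j)) dl (fun k _ => Hw i k)
   (fun k _ => H1 (z k)) (fun k _ => H2 (z k)).
simpl in G1, G2.
have -> : \sum_(v | predC s v) p i v = \sum_(v | ~~ s v) p i v by [].
have -> : \sum_(j | arc i j && (j != i) && predC s (z j)) w i j
        = \sum_(j | arc i j && (j != i) && ~~ s (z j)) w i j by [].
lra.
Qed.

Local Notation S := (subb par).

Lemma upd_self (z : V -> L) (i : V) : upd z i (z i) = z.
Proof. apply: functional_extensionality => k; rewrite /upd; by case: eqP => // ->. Qed.

Lemma F_self (z : V -> L) (i : V) : F z i (z i) = cost d p arc w z i.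
Proof. by rewrite /F upd_self. Qed.

Lemma Wt_CC (z : V -> L) (i : V) (s : pred L) : Wt z i (predC (predC s)) = Wt z i s.
Proof.
rewrite /Wt; congr (_ + _); apply: eq_bigl => j /=; by rewrite negbK.
Qed.

Lemma E2 (z : V -> L) (i : V) (x y : L) : y != r -> ~ anc par y x ->
  F z i y + d y x * (Wt z i (S y) - Wt z i (predC (S y))) <= F z i x.
Proof.
move=> yr Hx; apply: Fgen => q.
  move/subbP => Hq.
  rewrite (d_sym Htree Hlen Hd x q) (d_split1 Htree Hlen Hd yr Hq Hx).
  by rewrite (d_sym Htree Hlen Hd q y) addrC.
move=> _; have := d_tri Htree Hlen Hd y x q; lra.
Qed.

Lemma E3 (z : V -> L) (i : V) (x c : L) : c != r -> anc par c x ->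
  F z i (par c) + d (par c) x * (Wt z i (predC (S c)) - Wt z i (S c)) <= F z i x.
Proof.
move=> cr Hx; rewrite -(Wt_CC z i (S c)); apply: Fgen => q /=.
  move=> Hq; have Hq' : ~ anc par c q by move/subbP; apply/negP.
  rewrite (d_split2 Htree Hlen Hd cr Hx Hq') (d_sym Htree Hlen Hd x (par c)) addrC.
  by [].
move=> _; have := d_tri Htree Hlen Hd (par c) x q; lra.
Qed.

Lemma move_down (z : V -> L) (i : V) (c : L) : c != r -> F z i c < F z i (par c) ->
  Wt z i (predC (S c)) < Wt z i (S c).
Proof.
move=> cr H; have := E3 z i cr (anc_refl par c).
rewrite (d_sym Htree Hlen Hd) (d_epar Htree Hlen Hd cr) => H2.
have H3 : len c * (Wt z i (predC (S c)) - Wt z i (S c)) < 0 by lra.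
rewrite pmulr_rlt0 ?Hlen // in H3; lra.
Qed.

Lemma stay (z : V -> L) (i : V) (c : L) : c != r -> F z i (par c) <= F z i c ->
  Wt z i (S c) <= Wt z i (predC (S c)).
Proof.
move=> cr H; have := E2 z i cr (not_anc_par Htree cr).
rewrite (d_epar Htree Hlen Hd cr) => H2.
have H3 : len c * (Wt z i (S c) - Wt z i (predC (S c))) <= 0 by lra.
rewrite pmulr_rle0 ?Hlen // in H3; lra.
Qed.

Definition Inv (z : V -> L) := forall i, z i != r ->
  Wt z i (predC (S (z i))) <= Wt z i (S (z i)).

Lemma child_of (y x : L) : anc par y x -> x != y ->
  exists c, [/\ c != r, par c = y & anc par c x].
Proof.
move=> Hyx xy.
have exP : exists m, iter m par x == y by case: Hyx => m Hm; exists m; rewrite Hm.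
case: (ex_minnP exP) => m /eqP Hm Hmin.
case: m Hm Hmin => [|m] Hm Hmin; first by move: xy; rewrite -Hm /= eqxx.
exists (iter m par x); split.
- apply/negP => /eqP E.
  have : iter m par x == y by rewrite -Hm iterS E Htree.1.
  by move/Hmin; rewrite ltnn.
- by rewrite -iterS.
- by exists m.
Qed.

Lemma nash_of (z : V -> L) : Inv z ->
  (forall i c, is_child r par (z i) c -> ~ F z i c < F z i (z i)) ->
  pure_nash d p arc w z.
Proof.
move=> HI Hno i x; rewrite -F_self; change (cost d p arc w (upd z i x) i) with (F z i x).
case: (subbP par (z i) x) => Hx.
  case: (eqVneq x (z i)) => [->|xz]; first by [].
  have [c [cr Hpc Hc]] := child_of Hx xz.
  have Hnc : F z i (par c) <= F z i c.
    rewrite Hpc leNgt; apply/negP => H; apply: (Hno i c) => //.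
    by rewrite /is_child cr Hpc eqxx.
  have Hs := stay cr Hnc.
  have := E3 z i cr Hc; rewrite Hpc.
  have : 0 <= d (z i) x * (Wt z i (predC (S c)) - Wt z i (S c)).
    by apply: mulr_ge0; [exact: d_ge0 Htree Hlen Hd _ _|rewrite subr_ge0].
  lra.
have zr : z i != r by apply/negP => /eqP E; apply: Hx; rewrite E; exact: anc_r.
have := E2 z i zr Hx.
have : 0 <= d (z i) x * (Wt z i (S (z i)) - Wt z i (predC (S (z i)))).
  by apply: mulr_ge0; [exact: d_ge0 Htree Hlen Hd _ _|rewrite subr_ge0; exact: HI].
lra.
Qed.

Lemma Wt_upd_self (z : V -> L) (i : V) (x : L) (s : pred L) : Wt (upd z i x) i s = Wt z i s.
Proof.
rewrite /Wt; congr (_ + _); apply: eq_bigl => j.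
by rewrite /upd; case: eqP => // ->; rewrite !andbF.
Qed.

Lemma Wt_mono (z1 z2 : V -> L) (i : V) (s : pred L) : (forall j, s (z1 j) -> s (z2 j)) ->
  Wt z1 i s <= Wt z2 i s.
Proof.
move=> H; rewrite /Wt lerD2l -!big_filter_cond.
rewrite !(big_mkcond (fun j => s (_ j))).
apply: ler_sum => j _; case E: (s (z1 j)); first by rewrite H.
case: ifP => _ //; exact: Hw.
Qed.

Lemma inv_step (z z' : V -> L) : Inv z -> tm_step r par d p arc w z z' -> Inv z'.
Proof.
move=> HI [i0 [v [Hch Hlt ->]]] i.
move: (Hch) => /andP[vr /eqP Hpv].
case: (eqVneq i i0) => [->|ii0].
  rewrite /upd eqxx => _; rewrite !Wt_upd_self.
  apply: ltW; apply: move_down => //.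
  by rewrite Hpv F_self.
have Ei : upd z i0 v i = z i by rewrite /upd (negbTE ii0).
rewrite Ei => zr.
have H := HI i zr.
have Hm : forall j, S (z i) (z j) -> S (z i) (upd z i0 v j).
  move=> j; rewrite /upd; case: eqP => // ->.
  move/subbP => Ha; apply/subbP; apply: anc_par; by rewrite Hpv.
apply: le_trans (Wt_mono i (s := S (z i)) Hm).
apply: le_trans H.
apply: Wt_mono => j /=; apply: contra; exact: Hm.
Qed.

Definition Phi (z : V -> L) := #|[set ik : V * L | S ik.2 (z ik.1)]|.

Lemma phi_step (z z' : V -> L) : tm_step r par d p arc w z z' -> (Phi z < Phi z')%N.
Proof.
move=> [i0 [v [Hch _ ->]]]; move: (Hch) => /andP[vr /eqP Hpv].
apply: proper_card; apply/properP; split.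
  apply/subsetP => [[j x]]; rewrite !in_set /= /upd.
  case: eqP => // -> /subbP Ha; apply/subbP; apply: anc_par; by rewrite Hpv.
exists (i0, v); rewrite !in_set /=.
  by rewrite /upd eqxx; apply/subbP; exact: anc_refl.
by apply/negP => /subbP; rewrite -Hpv; exact: (not_anc_par Htree vr).
Qed.

Lemma phi_le (z : V -> L) : (Phi z <= #|V| * #|L|)%N.
Proof. by rewrite /Phi -card_prod; exact: max_card. Qed.

Lemma Inv0 (z : V -> L) : (forall i, z i = r) -> Inv z.
Proof. by move=> H i; rewrite H eqxx. Qed.

Lemma run_inv zs n : tm_run r par d p arc w zs n ->
  forall k, (k <= n)%N -> Inv (zs k) /\ (k <= Phi (zs k))%N.
Proof.
move=> [H0 Hs]; elim=> [|k IH] Hk; first by split => //; exact: Inv0.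
have [I1 I2] := IH (ltnW Hk).
have St := Hs k Hk; split; first exact: inv_step St.
by apply: leq_ltn_trans (phi_step St).
Qed.

End Game.

Theorem theorem3 (R : realFieldType) (V L : finType)
  (arc : rel V) (w : V -> V -> R) (p : V -> L -> R)
  (r : L) (par : L -> L) (len : L -> R) (d : L -> L -> R) :
  rooted_tree r par ->
  (forall v : L, v != r -> 0 < len v) ->
  shortest_path_metric r par len d ->
  (forall i j : V, 0 <= w i j) ->
  (forall (i : V) (v : L), 0 <= p i v) ->
  (* termination within |V| * |L| moves *)
  (forall (zs : nat -> V -> L) (n : nat),
     tm_run r par d p arc w zs n -> (n <= #|V| * #|L|)%N) /\
  (* the final profile is a pure Nash equilibrium *)
  (forall (zs : nat -> V -> L) (n : nat),
     tm_run r par d p arc w zs n ->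
     ~ (exists z', tm_step r par d p arc w (zs n) z') ->
     pure_nash d p arc w (zs n)) /\
  (* in particular a pure Nash equilibrium exists *)
  (exists z : V -> L, pure_nash d p arc w z).
Proof.
move=> Ht Hl Hd Hw Hp.
have P1 : forall (zs : nat -> V -> L) (n : nat),
     tm_run r par d p arc w zs n -> (n <= #|V| * #|L|)%N.
  move=> zs n Hr; have [_ H] := run_inv Ht Hl Hd Hw Hp Hr (leqnn n).
  apply: leq_trans H _; exact: phi_le.
have P2 : forall (zs : nat -> V -> L) (n : nat),
     tm_run r par d p arc w zs n ->
     ~ (exists z', tm_step r par d p arc w (zs n) z') ->
     pure_nash d p arc w (zs n).
  move=> zs n Hr Hn; have [HI _] := run_inv Ht Hl Hd Hw Hp Hr (leqnn n).
  apply: (nash_of Ht Hl Hd Hw Hp HI) => i c Hc Hlt; apply: Hn.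
  exists (upd (zs n) i c), i, c; split => //.
  by rewrite -(F_self arc w p d (zs n) i).
split; first exact: P1; split; first exact: P2.
have Ex : forall m, exists zs n, tm_run r par d p arc w zs n /\
    ((m <= n)%N \/ ~ (exists z', tm_step r par d p arc w (zs n) z')).
  elim=> [|m [zs [n [Hr Hor]]]].
    exists (fun _ _ => r), 0%N; split; last by left.
    by split => // k.
  case: (classic (exists z', tm_step r par d p arc w (zs n) z')) => Hst; last first.
    by exists zs, n; split => //; right.
  case: Hor => [Hmn|]; last by [].
  case: Hst => z' Hz'.
  exists (fun k => if k == n.+1 then z' else zs k), n.+1; split; last by left.
  case: Hr => H0 Hs; split => // k Hk.
  rewrite eqSS; case: (ltngtP k n) => Hkn.
  - rewrite (ltn_eqF Hk); exact: Hs.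
  - by rewrite ltnS leqNgt Hkn in Hk.
  - by rewrite (ltn_eqF Hk) Hkn.
have [zs [n [Hr Hor]]] := Ex (#|V| * #|L|).+1.
exists (zs n); apply: (P2 zs n Hr); case: Hor => // H.
by have := P1 zs n Hr; rewrite leqNgt H.
Qed.
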